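(* Let $m\in[0,1]$, $n=\sqrt{1-m^2}$, and for $k\in[-\pi,\pi]$ define $\omega=\arccos(n\cos k)\in[0,\pi]$, $\omega_{\rm D}=\sqrt{k^2+m^2}$, $v=\frac{n\sin k}{\sin\omega}$, $v_{\rm D}=\frac{k}{\sqrt{k^2+m^2}}$, $$\alpha(k,m)=\omega_{\rm D}-\omega,\qquad \beta(k,m)=1-v\,v_{\rm D}-\sqrt{(1-v^2)(1-v_{\rm D}^2)},$$ $$H(k)=\frac{\omega}{\sin\omega}\begin{pmatrix}-n\sin k & m\\ m & n\sin k\end{pmatrix},\qquad H_{\rm D}(k)=\begin{pmatrix}-k & m\\ m & k\end{pmatrix},$$ $V(k,t)=e^{-iH_{\rm D}(k)t}\,\big(e^{-iH(k)t}\big)^\dagger$, and let $\mu(k,m,t)\in[0,\pi]$ be such that the eigenvalues of the $SU(2)$ matrix $V(k,t)$ are $e^{\pm i\mu(k,m,t)}$. Let $0\le\bar k<\pi$, let $N$ be a positive integer, and put $$\bar\alpha=\max_{k\in[-\bar k,\bar k]}|\alpha(k,m)|,\qquad \bar\beta=\max_{k\in[-\bar k,\bar k]}|\beta(k,m)|,\qquad f(\bar k,m,N)=\frac{\arccos\!\big(\cos(\tfrac{\pi}{2N})+\bar\beta\big)}{\bar\alpha}.$$ If $\bar\beta\le 1-\cos(\tfrac{\pi}{2N})$ and $0\le t\le f(\bar k,m,N)$, then for every $k\in[-\bar k,\bar k]$ $$N\,\mu(k,m,t)\ \le\ g(\bar k,m,N,t)\ \le\ \frac{\pi}{2},\qquad\text{where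 } g(\bar k,m,N,t):=N\arccos\!\big(\cos(\bar\alpha t)-\bar\beta\big).$$
   Context: $H(k)$ is the momentum-space effective Hamiltonian of the one-dimensional Dirac quantum cellular automaton with mass parameter $m$, and $H_{\rm D}(k)$ the one-dimensional Dirac Hamiltonian in Planck units; both are traceless, so $V(k,t)\in SU(2)$. *)

(* Defs.v *)
From Stdlib Require Import Reals Factorial.
From Coquelicot Require Import Coquelicot.
Open Scope R_scope.

Record M2 := mkM2 { e11 : C; e12 : C; e21 : C; e22 : C }.

Definition M2id : M2 := mkM2 (RtoC 1) (RtoC 0) (RtoC 0) (RtoC 1).
Definition M2add (A B : M2) : M2 :=
  mkM2 (Cplus (e11 A) (e11 B)) (Cplus (e12 A) (e12 B))
       (Cplus (e21 A) (e21 B)) (Cplus (e22 A) (e22 B)).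
Definition M2scale (s : C) (A : M2) : M2 :=
  mkM2 (Cmult s (e11 A)) (Cmult s (e12 A)) (Cmult s (e21 A)) (Cmult s (e22 A)).
Definition M2sub (A B : M2) : M2 := M2add A (M2scale (RtoC (-1)) B).
Definition M2mul (A B : M2) : M2 :=
  mkM2 (Cplus (Cmult (e11 A) (e11 B)) (Cmult (e12 A) (e21 B)))
       (Cplus (Cmult (e11 A) (e12 B)) (Cmult (e12 A) (e22 B)))
       (Cplus (Cmult (e21 A) (e11 B)) (Cmult (e22 A) (e21 B)))
       (Cplus (Cmult (e21 A) (e12 B)) (Cmult (e22 A) (e22 B))).
Definition M2adj (A : M2) : M2 :=
  mkM2 (Cconj (e11 A)) (Cconj (e21 A)) (Cconj (e12 A)) (Cconj (e22 A)).
Definition M2det (A : M2) : C :=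
  Cminus (Cmult (e11 A) (e22 A)) (Cmult (e12 A) (e21 A)).
Fixpoint M2pow (A : M2) (k : nat) : M2 :=
  match k with O => M2id | S k' => M2mul A (M2pow A k') end.

Definition Cseries_exp (z : nat -> C) : C :=
  (Series (fun k => fst (z k) / INR (Factorial.fact k)), Series (fun k => snd (z k) / INR (Factorial.fact k))).

Definition M2exp (A : M2) : M2 :=
  mkM2 (Cseries_exp (fun k => e11 (M2pow A k))) (Cseries_exp (fun k => e12 (M2pow A k)))
       (Cseries_exp (fun k => e21 (M2pow A k))) (Cseries_exp (fun k => e22 (M2pow A k))).

Definition Ci : C := (0, 1).
Definition cexpi (x : R) : C := (cos x, sin x).

Definition nn (m : R) : R := sqrt (1 - m ^ 2).
Definition omega (k m : R) : R := acos (nn m * cos k).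
Definition omegaD (k m : R) : R := sqrt (k ^ 2 + m ^ 2).
Definition vel (k m : R) : R := nn m * sin k / sin (omega k m).
Definition velD (k m : R) : R := k / sqrt (k ^ 2 + m ^ 2).
Definition alpha (k m : R) : R := omegaD k m - omega k m.
Definition beta (k m : R) : R :=
  1 - vel k m * velD k m - sqrt ((1 - vel k m ^ 2) * (1 - velD k m ^ 2)).

Definition Hqca (k m : R) : M2 :=
  M2scale (RtoC (omega k m / sin (omega k m)))
    (mkM2 (RtoC (- (nn m * sin k))) (RtoC m) (RtoC m) (RtoC (nn m * sin k))).
Definition HDirac (k m : R) : M2 :=
  mkM2 (RtoC (- k)) (RtoC m) (RtoC m) (RtoC k).

Definition Vmat (k m t : R) : M2 :=
  M2mul (M2exp (M2scale (Cmult (RtoC (- t)) Ci) (HDirac k m)))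
        (M2adj (M2exp (M2scale (Cmult (RtoC (- t)) Ci) (Hqca k m)))).

Definition is_eigenvalue (A : M2) (z : C) : Prop :=
  M2det (M2sub A (M2scale z M2id)) = RtoC 0.

Definition is_max_on (F : R -> R) (a b M : R) : Prop :=
  (exists k0, a <= k0 <= b /\ F k0 = M) /\ (forall k, a <= k <= b -> F k <= M).

Definition f_bound (abar bbar : R) (N : nat) : R :=
  acos (cos (PI / (2 * INR N)) + bbar) / abar.
Definition g_bound (abar bbar : R) (N : nat) (t : R) : R :=
  INR N * acos (cos (abar * t) - bbar).

(* Main.v *)
Require Import Defs.
From Stdlib Require Import Reals Lra Lia.
From Coquelicot Require Import Coquelicot.
Open Scope R_scope.

Definition Amat (a b : R) : M2 := mkM2 (RtoC (- a)) (RtoC b) (RtoC b) (RtoC a).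
Definition Mk (a b t : R) : M2 := M2scale (Cmult (RtoC (- t)) Defs.Ci) (Amat a b).

Ltac csimp := unfold M2mul, M2scale, M2add, M2adj, M2det, M2sub, M2id, Amat, Ci,
  Cmult, Cplus, Cminus, Copp, Cconj, RtoC in *; simpl in *.

Lemma pow_even a b t j : let y := (a^2+b^2)*t^2 in
  M2pow (Mk a b t) (2*j) = mkM2 ((-1)^j * y^j, 0) (0,0) (0,0) ((-1)^j * y^j, 0).
Proof.
  intro y; induction j as [|j IH].
  - simpl. unfold M2id, RtoC. f_equal; f_equal; ring.
  - replace (2 * S j)%nat with (S (S (2*j))) by lia.
    change (M2pow (Mk a b t) (S (S (2*j)))) with
      (M2mul (Mk a b t) (M2mul (Mk a b t) (M2pow (Mk a b t) (2*j)))).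
    rewrite IH. unfold Mk, y. csimp. f_equal; f_equal; ring.
Qed.
Definition Lc (y : R) : R := let (a, _) := exist_cos y in a.
Definition Ls (y : R) : R := let (a, _) := exist_sin y in a.

Lemma cos_Lc x : cos x = Lc (x²). Proof. reflexivity. Qed.
Lemma sin_Ls x : sin x = x * Ls (x²). Proof. unfold sin, Ls. destruct (exist_sin x²). reflexivity. Qed.

Lemma Lc_ser y : is_series (fun n => cos_n n * y ^ n) (Lc y).
Proof. unfold Lc. destruct (exist_cos y) as [l H]. apply is_series_Reals. exact H. Qed.
Lemma Ls_ser y : is_series (fun n => sin_n n * y ^ n) (Ls y).
Proof. unfold Ls. destruct (exist_sin y) as [l H]. apply is_series_Reals. exact H. Qed.

Lemma ser_oe (z : nat -> R) l1 l2 :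
  is_series (fun n => z (2*n)%nat) l1 -> is_series (fun n => z (2*n+1)%nat) l2 ->
  is_series z (l1 + l2).
Proof.
  intros H1 H2.
  assert (Hp : forall (w : nat -> R) l, is_series w l <-> is_pseries w 1 l).
  { intros w l; unfold is_pseries; split; apply is_series_ext; intro n;
    rewrite pow_n_pow, pow1; unfold scal; simpl; unfold mult; simpl; ring. }
  apply Hp. replace (l1 + l2) with (l1 + 1 * l2) by ring.
  apply is_pseries_odd_even; replace (1^2) with 1 by ring; apply (proj1 (Hp _ _)); auto.
Qed.

Lemma ser_main (z : nat -> R) y c d :
  (forall n, z (2*n)%nat = c * ((-1)^n * y^n) / INR (Factorial.fact (2*n))) ->
  (forall n, z (2*n+1)%nat = d * ((-1)^n * y^n) / INR (Factorial.fact (2*n+1))) ->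
  Series z = c * Lc y + d * Ls y.
Proof.
  intros He Ho. apply is_series_unique. apply ser_oe.
  - eapply is_series_ext; [|apply (is_series_scal c _ _ (Lc_ser y))].
    intro n. rewrite He. unfold cos_n. 
    assert (HF : INR (Factorial.fact (2*n)) <> 0) by apply not_0_INR, Factorial.fact_neq_0.
    set (F := INR (Factorial.fact (2*n))) in *.
    unfold scal; simpl; unfold mult; simpl. field. exact HF.
  - eapply is_series_ext; [|apply (is_series_scal d _ _ (Ls_ser y))].
    intro n. rewrite Ho. unfold sin_n.
    assert (HF : INR (Factorial.fact (2*n+1)) <> 0) by apply not_0_INR, Factorial.fact_neq_0.
    set (F := INR (Factorial.fact (2*n+1))) in *.
    unfold scal; simpl; unfold mult; simpl. field. exact HF.
Qed.

Lemma pow_odd a b t j : let y := (a^2+b^2)*t^2 in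
  M2pow (Mk a b t) (2*j+1) = mkM2 (0, t*a*((-1)^j * y^j)) (0, -(t*b)*((-1)^j * y^j))
     (0, -(t*b)*((-1)^j * y^j)) (0, -(t*a)*((-1)^j * y^j)).
Proof.
  intro y. replace (2*j+1)%nat with (S (2*j)) by lia.
  change (M2pow (Mk a b t) (S (2*j))) with (M2mul (Mk a b t) (M2pow (Mk a b t) (2*j))).
  rewrite pow_even. unfold Mk, y. csimp. f_equal; f_equal; ring.
Qed.

Lemma exp_Mk a b t : let y := (a^2+b^2)*t^2 in
  M2exp (Mk a b t) = mkM2 (Lc y, a * (t * Ls y)) (0, - b * (t * Ls y))
     (0, - b * (t * Ls y)) (Lc y, - a * (t * Ls y)).
Proof.
  intro y. unfold M2exp, Cseries_exp. f_equal; f_equal.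
  - rewrite (ser_main _ y 1 0); [ring | intro n; cbv beta; rewrite pow_even; cbn [fst snd e11 e12 e21 e22]; fold y; field; apply not_0_INR, Factorial.fact_neq_0 | intro n; cbv beta; rewrite pow_odd; cbn [fst snd e11 e12 e21 e22]; fold y; field; apply not_0_INR, Factorial.fact_neq_0].
  - rewrite (ser_main _ y 0 (t*a)); [ring | intro n; cbv beta; rewrite pow_even; cbn [fst snd e11 e12 e21 e22]; fold y; field; apply not_0_INR, Factorial.fact_neq_0 | intro n; cbv beta; rewrite pow_odd; cbn [fst snd e11 e12 e21 e22]; fold y; field; apply not_0_INR, Factorial.fact_neq_0].
  - rewrite (ser_main _ y 0 0); [ring | intro n; cbv beta; rewrite pow_even; cbn [fst snd e11 e12 e21 e22]; fold y; field; apply not_0_INR, Factorial.fact_neq_0 | intro n; cbv beta; rewrite pow_odd; cbn [fst snd e11 e12 e21 e22]; fold y; field; apply not_0_INR, Factorial.fact_neq_0].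
  - rewrite (ser_main _ y 0 (-(t*b))); [ring | intro n; cbv beta; rewrite pow_even; cbn [fst snd e11 e12 e21 e22]; fold y; field; apply not_0_INR, Factorial.fact_neq_0 | intro n; cbv beta; rewrite pow_odd; cbn [fst snd e11 e12 e21 e22]; fold y; field; apply not_0_INR, Factorial.fact_neq_0].
  - rewrite (ser_main _ y 0 0); [ring | intro n; cbv beta; rewrite pow_even; cbn [fst snd e11 e12 e21 e22]; fold y; field; apply not_0_INR, Factorial.fact_neq_0 | intro n; cbv beta; rewrite pow_odd; cbn [fst snd e11 e12 e21 e22]; fold y; field; apply not_0_INR, Factorial.fact_neq_0].
  - rewrite (ser_main _ y 0 (-(t*b))); [ring | intro n; cbv beta; rewrite pow_even; cbn [fst snd e11 e12 e21 e22]; fold y; field; apply not_0_INR, Factorial.fact_neq_0 | intro n; cbv beta; rewrite pow_odd; cbn [fst snd e11 e12 e21 e22]; fold y; field; apply not_0_INR, Factorial.fact_neq_0].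
  - rewrite (ser_main _ y 1 0); [ring | intro n; cbv beta; rewrite pow_even; cbn [fst snd e11 e12 e21 e22]; fold y; field; apply not_0_INR, Factorial.fact_neq_0 | intro n; cbv beta; rewrite pow_odd; cbn [fst snd e11 e12 e21 e22]; fold y; field; apply not_0_INR, Factorial.fact_neq_0].
  - rewrite (ser_main _ y 0 (-(t*a))); [ring | intro n; cbv beta; rewrite pow_even; cbn [fst snd e11 e12 e21 e22]; fold y; field; apply not_0_INR, Factorial.fact_neq_0 | intro n; cbv beta; rewrite pow_odd; cbn [fst snd e11 e12 e21 e22]; fold y; field; apply not_0_INR, Factorial.fact_neq_0].
Qed.
Definition Emat (C S a b : R) : M2 := mkM2 (C, a * S) (0, - b * S) (0, - b * S) (C, - a * S).

Lemma eig_cos C1 S1 a1 b1 C2 S2 a2 b2 mu :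
  C1^2 + (a1^2+b1^2)*S1^2 = 1 -> C2^2 + (a2^2+b2^2)*S2^2 = 1 ->
  is_eigenvalue (M2mul (Emat C1 S1 a1 b1) (M2adj (Emat C2 S2 a2 b2))) (cexpi mu) ->
  cos mu = C1*C2 + (a1*a2+b1*b2)*S1*S2.
Proof.
  intros D1 D2 H. unfold is_eigenvalue, Emat, cexpi, M2mul, M2scale, M2add, M2adj, M2det, M2sub, M2id, Ci, Cmult, Cplus, Cminus, Copp, Cconj, RtoC in H; simpl in H.
  injection H as Hr Hi.
  set (c := cos mu) in *. set (s := sin mu) in *.
  set (T := C1*C2 + (a1*a2+b1*b2)*S1*S2).
  assert (Er : c^2 - s^2 - 2*T*c + (C1^2 + (a1^2+b1^2)*S1^2)*(C2^2 + (a2^2+b2^2)*S2^2) = 0)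
    by (rewrite <- Hr; unfold T; ring).
  assert (Ei : 2*c*s - 2*T*s = 0) by (rewrite <- Hi; unfold T; ring).
  rewrite D1, D2 in Er.
  assert (Hcs : c^2 + s^2 = 1) by (unfold c, s; rewrite <- (sin2_cos2 mu); unfold Rsqr; ring).
  assert (E1 : (c - T) * c = 0) by nra.
  assert (E2 : (c - T) * s = 0) by nra.
  assert (c - T = (c - T)*(c^2+s^2)) by (rewrite Hcs; ring).
  nra.
Qed.

Lemma cs_facts a b t : let y := (a^2+b^2)*t^2 in let w := sqrt (a^2+b^2) in
  Lc y = cos (w*t) /\ w * (t * Ls y) = sin (w*t).
Proof.
  intros y w. assert (Hy : (w*t)² = y).
  { unfold Rsqr, y, w. replace (sqrt (a^2+b^2) * t * (sqrt (a^2+b^2) * t))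
      with (sqrt (a^2+b^2) ^2 * t^2) by ring. rewrite pow2_sqrt; [ring|nra]. }
  rewrite cos_Lc, sin_Ls, Hy. split; [reflexivity|ring].
Qed.

Lemma norm1 a b t : let y := (a^2+b^2)*t^2 in
  (Lc y)^2 + (a^2+b^2) * (t * Ls y)^2 = 1.
Proof.
  intro y. destruct (cs_facts a b t) as [H1 H2]. fold y in H1, H2.
  set (w := sqrt (a^2+b^2)) in *.
  assert (Hw : w^2 = a^2+b^2) by (unfold w; apply pow2_sqrt; nra).
  rewrite H1, <- Hw.
  replace (w ^ 2 * (t * Ls y) ^ 2) with ((w * (t * Ls y))^2) by ring.
  rewrite H2. rewrite <- (sin2_cos2 (w * t)). unfold Rsqr. ring.
Qed.

Lemma Hqca_eq k m : Hqca k m = Amat (omega k m / sin (omega k m) * (nn m * sin k))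
   (omega k m / sin (omega k m) * m).
Proof.
  unfold Hqca, Amat, M2scale, Cmult, RtoC; simpl. f_equal; f_equal; ring.
Qed.

Lemma sin0_k k : -PI < k < PI -> sin k = 0 -> k = 0.
Proof.
  intros Hk Hs. destruct (Rtotal_order k 0) as [Hl|[He|Hg]]; auto.
  - assert (0 < sin (-k)) by (apply sin_gt_0; lra). rewrite sin_neg in H. lra.
  - assert (0 < sin k) by (apply sin_gt_0; lra). lra.
Qed.

Lemma key k m t mu : 0 <= m <= 1 -> -PI < k < PI ->
  is_eigenvalue (Vmat k m t) (cexpi mu) ->
  cos (alpha k m * t) - Rabs (beta k m) <= cos mu.
Proof.
  intros Hm Hk H.
  assert (HV : Vmat k m t = M2mul
     (Emat (Lc ((k^2+m^2)*t^2)) (t * Ls ((k^2+m^2)*t^2)) k m)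
     (M2adj (Emat (Lc (((omega k m / sin (omega k m) * (nn m * sin k))^2 + (omega k m / sin (omega k m) * m)^2)*t^2))
                  (t * Ls (((omega k m / sin (omega k m) * (nn m * sin k))^2 + (omega k m / sin (omega k m) * m)^2)*t^2))
                  (omega k m / sin (omega k m) * (nn m * sin k)) (omega k m / sin (omega k m) * m)))).
  { unfold Vmat. rewrite Hqca_eq.
    change (M2scale (Cmult (RtoC (- t)) Defs.Ci) (HDirac k m)) with (Mk k m t).
    change (M2scale (Cmult (RtoC (- t)) Defs.Ci) (Amat (omega k m / sin (omega k m) * (nn m * sin k))
     (omega k m / sin (omega k m) * m))) with (Mk (omega k m / sin (omega k m) * (nn m * sin k))
     (omega k m / sin (omega k m) * m) t).
    rewrite !exp_Mk. reflexivity. }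
  rewrite HV in H. apply eig_cos in H; [|apply norm1|apply norm1].
  remember (omega k m / sin (omega k m)) as c eqn:Ec.
  remember (c * (nn m * sin k)) as a2 eqn:Ea2.
  remember (c * m) as b2 eqn:Eb2.
  destruct (cs_facts k m t) as [F1 G1]. destruct (cs_facts a2 b2 t) as [F2 G2].
  set (C1 := Lc ((k^2+m^2)*t^2)) in *. set (S1 := t * Ls ((k^2+m^2)*t^2)) in *.
  set (C2 := Lc ((a2^2+b2^2)*t^2)) in *. set (S2 := t * Ls ((a2^2+b2^2)*t^2)) in *.
  set (n := nn m) in *.
  assert (Hn2 : n^2 = 1 - m^2) by (unfold n, nn; apply pow2_sqrt; nra).
  assert (Hn0 : 0 <= n) by (unfold n, nn; apply sqrt_pos).
  assert (Hn1 : n <= 1) by nra.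
  pose proof (COS_bound k) as Hck. pose proof (SIN_bound k) as Hsk.
  assert (Hsc : sin k ^2 + cos k ^2 = 1) by (rewrite <- (sin2_cos2 k); unfold Rsqr; ring).
  assert (Hx : -1 <= n * cos k <= 1) by (split; nra).
  set (s := sin (omega k m)) in *.
  assert (Hs : s = sqrt (1 - (n * cos k)²)) by (unfold s, omega; fold n; apply sin_acos; exact Hx).
  assert (Hs0 : 0 <= s) by (rewrite Hs; apply sqrt_pos).
  assert (Hs2 : s^2 = n^2 * sin k ^2 + m^2).
  { rewrite Hs, pow2_sqrt; unfold Rsqr; nra. }
  set (om := omega k m) in *.
  pose proof (acos_bound (n * cos k)) as Hom. change (acos (n * cos k)) with om in Hom.
  destruct (Req_dec s 0) as [Hsz|Hsp].
  -
    assert (Hm0 : m = 0) by nra.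
    assert (Hns : n * sin k = 0) by nra.
    assert (Hn : n = 1) by (subst m; nra).
    assert (Hk0 : k = 0) by (apply sin0_k; auto; nra).
    assert (Ha2 : a2 = 0) by (rewrite Ea2, Hns; ring).
    assert (Hb2 : b2 = 0) by (rewrite Eb2, Hm0; ring). clear Ea2 Eb2.
    subst a2 b2 k m.
    replace (0^2+0^2) with 0 in F1, F2 by ring. rewrite sqrt_0, Rmult_0_l, cos_0 in F1, F2.
    rewrite F1, F2 in H.
    pose proof (COS_bound (alpha 0 0 * t)). pose proof (Rabs_pos (beta 0 0)). nra.
  - assert (Hsp' : 0 < s) by lra.
    assert (Hom0 : 0 < om).
    { destruct Hom as [Ho _]. destruct (Req_dec om 0) as [E|E]; [|lra]. exfalso.
      unfold s in Hsp'. rewrite E, sin_0 in Hsp'. lra. }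
    assert (Hcp : 0 < c) by (rewrite Ec; apply Rdiv_lt_0_compat; lra).
    assert (Hw2 : a2^2 + b2^2 = om^2).
    { rewrite Ea2, Eb2, Ec. replace ((om / s * (n * sin k)) ^ 2 + (om / s * m) ^ 2)
        with ((om/s)^2 * (n^2 * sin k^2 + m^2)) by ring. rewrite <- Hs2. field. lra. }
    rewrite Hw2 in F2, G2. rewrite sqrt_pow2 in F2, G2 by lra.
    set (w1 := sqrt (k^2+m^2)) in *.
    assert (Hkm : 0 < k^2+m^2).
    { destruct (Req_dec k 0) as [E|E].
      - subst k. rewrite sin_0 in Hs2. nra.
      - nra. }
    assert (Hw1 : 0 < w1) by (apply sqrt_lt_R0; lra).
    assert (Hw1s : w1^2 = k^2+m^2) by (apply pow2_sqrt; lra).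
    assert (Hcm : cos mu = cos (w1*t) * cos (om*t) + ((n*k*sin k + m^2)/(w1*s)) * sin (w1*t) * sin (om*t)).
    { rewrite H, F1, F2, <- G1, <- G2, Ea2, Eb2, Ec. field. split; lra. }
    assert (Hb : beta k m = 1 - (n*k*sin k + m^2)/(w1*s)).
    { unfold beta, vel, velD. change (nn m) with n. change (sin (omega k m)) with s.
      change (sqrt (k^2+m^2)) with w1.
      assert (E1 : 1 - (n*sin k/s)^2 = m^2/s^2).
      { replace (m^2) with (s^2 - (n*sin k)^2) by (rewrite Hs2; ring). field. lra. }
      assert (E2 : 1 - (k/w1)^2 = m^2/w1^2).
      { replace (m^2) with (w1^2 - k^2) by (rewrite Hw1s; ring). field. lra. }
      rewrite E1, E2.
      replace (m^2/s^2 * (m^2/w1^2)) with ((m^2/(w1*s))^2) by (field; lra).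
      rewrite sqrt_pow2. field. lra.
      apply Rmult_le_pos; [nra|]. apply Rlt_le, Rinv_0_lt_compat. nra. }
    assert (Ha : alpha k m = w1 - om) by reflexivity.
    rewrite Ha, Hb, Hcm. set (g := (n*k*sin k + m^2)/(w1*s)).
    replace ((w1 - om) * t) with (w1*t - om*t) by ring. rewrite cos_minus.
    pose proof (SIN_bound (w1*t)). pose proof (SIN_bound (om*t)).
    assert (-1 <= sin (w1*t) * sin (om*t) <= 1) by (split; nra).
    destruct (Rcase_abs (1 - g)) as [Hg|Hg].
    + rewrite Rabs_left by lra. nra.
    + rewrite Rabs_right by lra. nra.
Qed.

Theorem lemma3 (m kbar : R) (N : nat) (abar bbar t : R) :
  0 <= m <= 1 ->
  0 <= kbar < PI ->
  (0 < N)%nat ->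
  is_max_on (fun k => Rabs (alpha k m)) (- kbar) kbar abar ->
  is_max_on (fun k => Rabs (beta k m)) (- kbar) kbar bbar ->
  bbar <= 1 - cos (PI / (2 * INR N)) ->
  0 <= t <= f_bound abar bbar N ->
  forall k : R, - kbar <= k <= kbar ->
  forall mu : R, 0 <= mu <= PI ->
  is_eigenvalue (Vmat k m t) (cexpi mu) ->
  is_eigenvalue (Vmat k m t) (cexpi (- mu)) ->
  INR N * mu <= g_bound abar bbar N t /\ g_bound abar bbar N t <= PI / 2.
Proof.
  intros Hm Hkb HN [[ka [Hka Ea]] Ma] [[kb [Hkb2 Eb]] Mb] Hbb Ht k Hk mu Hmu Hev _.
  assert (Ha0 : 0 <= abar) by (rewrite <- Ea; apply Rabs_pos).
  assert (Hb0 : 0 <= bbar) by (rewrite <- Eb; apply Rabs_pos).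
  assert (HNr : 1 <= INR N) by (apply (le_INR 1); lia).
  pose proof PI_RGT_0 as HPI.
  set (th := PI / (2 * INR N)) in *.
  assert (Hth : 0 < th <= PI/2).
  { unfold th. split. apply Rdiv_lt_0_compat; lra.
    apply (Rmult_le_reg_r (2 * INR N)); [lra|]. field_simplify; [nra|lra]. }
  assert (Hcth : 0 <= cos th) by (apply cos_ge_0; lra).
  set (q := cos (abar * t) - bbar).
  set (p := cos th + bbar).
  assert (Hp : -1 <= p <= 1) by (unfold p; lra).
  assert (Hq : cos th <= q /\ abar * t <= PI).
  { destruct (Req_dec abar 0) as [E|E].
    - unfold q. rewrite E, Rmult_0_l, cos_0. lra.
    - assert (Hap : 0 < abar) by lra.
      destruct Ht as [Ht0 Ht1]. unfold f_bound in Ht1. fold th in Ht1. fold p in Ht1.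
      pose proof (acos_bound p) as Hab.
      assert (Hat : abar * t <= acos p).
      { apply (Rmult_le_compat_l abar) in Ht1; [|lra].
        replace (abar * (acos p / abar)) with (acos p) in Ht1 by (field; lra). exact Ht1. }
      split; [|lra].
      assert (cos (acos p) <= cos (abar * t)) by (apply cos_decr_1; nra).
      rewrite cos_acos in H by exact Hp. unfold q, p in *. lra. }
  destruct Hq as [Hq Hat].
  assert (Hq1 : q <= 1) by (unfold q; pose proof (COS_bound (abar*t)); lra).
  assert (Hqb : -1 <= q <= 1) by lra.
  pose proof (acos_bound q) as Haq.
  assert (Hacq : acos q <= th).
  { apply cos_decr_0; try lra. rewrite cos_acos by exact Hqb. exact Hq. }
  split.
  - unfold g_bound. fold q. apply Rmult_le_compat_l; [lra|].
    apply cos_decr_0; try lra. rewrite cos_acos by exact Hqb.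
    assert (Hkey := key k m t mu Hm ltac:(lra) Hev).
    assert (HA := Ma k Hk). assert (HB := Mb k Hk). simpl in HA, HB.
    assert (cos (abar * t) <= cos (alpha k m * t)).
    { destruct Ht as [Ht0 _].
      assert (E : cos (alpha k m * t) = cos (Rabs (alpha k m) * t)).
      { destruct (Rcase_abs (alpha k m)).
        - rewrite Rabs_left by lra. rewrite <- cos_neg. f_equal. ring.
        - rewrite Rabs_right by lra. reflexivity. }
      rewrite E. apply cos_decr_1; try nra.
      pose proof (Rabs_pos (alpha k m)). nra. }
    unfold q. lra.
  - unfold g_bound. fold q.
    apply Rle_trans with (INR N * th). apply Rmult_le_compat_l; lra.
    unfold th. right. field. lra.
Qed.
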